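(* For every $k \in \mathbb{N}$ we have $\mathrm{N}(k) = k + \lfloor \log_2(k + 1 + \lfloor \log_2(k+1) \rfloor) \rfloor$.
   Context: The function $\mathrm{N} : \mathbb{N} \to \mathbb{N}$, $\mathbb{N} = \{1,2,\dots\}$, is defined recursively by $\mathrm{N}(1) = 2$ and, for $k \ge 2$, $\mathrm{N}(k) = \max_{i \in \{2,\dots,k\}} \min(2i, \mathrm{N}(k-i+1) + i)$. *)

(* Defs.v *)
From mathcomp Require Import all_boot.
Set Implicit Arguments. Unset Strict Implicit. Unset Printing Implicit Defensive.

(* N : {1,2,...} -> {1,2,...}, N(1) = 2 and for k >= 2
   N(k) = max_{i in {2..k}} min(2i, N(k-i+1) + i).
   In the table s = [:: N 1; ...; N k], N j = nth 0 s j.-1. *)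

Definition Nnext (s : seq nat) : nat :=
  let k := size s in
  if k is 0 then 2
  else \max_(2 <= i < k.+2) minn (2 * i) (nth 0 s (k.+1 - i) + i).
  (* here the new index is k+1, so N(k+1-i+1) = nth 0 s (k+1-i) *)

Fixpoint Ntable (k : nat) : seq nat :=
  if k is k'.+1 then rcons (Ntable k') (Nnext (Ntable k')) else [::].

(* N k for k >= 1 (N 0 is a junk value, irrelevant since the domain is {1,2,...}) *)
Definition N (k : nat) : nat := nth 0 (Ntable k) k.-1.

Definition log2floor (m : nat) : nat := trunc_log 2 m.

(* Main.v *)
Require Import Defs.
From mathcomp Require Import all_boot zify.

Lemma core k m : 1 <= k ->
  (2 ^ m <= k + 1 + trunc_log 2 (k + 1)) = (2 ^ m <= k + m).
Proof.
move=> k1.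
have k0 : 0 < k + 1 by rewrite addn1.
have /andP[lo hi] := @trunc_log_bounds 2 (k + 1) isT k0.

set t := trunc_log 2 (k + 1) in lo hi *.
rewrite expnS in hi.
have tP : t < 2 ^ t by apply: ltn_expl.
have [mt|tm] := leqP m t.
  have : 2 ^ m <= 2 ^ t by rewrite leq_exp2l.
  move=> h; case: m mt h => [|m] mt h; first by rewrite expn0; apply/idP/idP => _; lia.
  apply/idP/idP => _; lia.
have [e|tm2] := eqVneq m t.+1.
  rewrite e; apply/idP/idP; lia.
have [d ->] : exists d, m = t.+2 + d by exists (m - t.+2); lia.
have dP : d < 2 ^ d by apply: ltn_expl.
rewrite expnD !expnS.
apply/idP/idP; nia.
Qed.

Lemma Lspec k m : 1 <= k ->
  (m <= log2floor (k + 1 + log2floor (k + 1))) = (2 ^ m <= k + m).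
Proof.
move=> k1; rewrite -core // /log2floor.
apply/idP/idP => h.
  apply: leq_trans (trunc_logP (isT : 1 < 2) _); last by lia.
  by rewrite leq_exp2l.
by apply: trunc_log_max.
Qed.

Lemma size_tab k : size (Ntable k) = k.
Proof. by elim: k => //= k IH; rewrite size_rcons IH. Qed.

Lemma tab k j : j < k -> nth 0 (Ntable k) j = N j.+1.
Proof.
elim: k => // k IH jk /=.
rewrite nth_rcons size_tab.
case: ltnP => [jl|kj]; first exact: IH.
have -> : j = k by lia.
by rewrite eqxx /N /= nth_rcons size_tab ltnn eqxx.
Qed.

Lemma Nrec k : 1 <= k ->
  N k.+1 = \max_(2 <= i < k.+2) minn (2 * i) (N (k.+2 - i) + i).
Proof.
move=> k1; rewrite /N /= nth_rcons size_tab ltnn eqxx /Nnext size_tab.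
case: k k1 => // k _.
apply: eq_big_nat => i /andP[i2 ik].
rewrite tab; last by lia.
by have -> : (k.+2 - i).+1 = k.+3 - i by lia.
Qed.

Theorem theorem7p21 (k : nat) : 1 <= k ->
  N k = k + log2floor (k + 1 + log2floor (k + 1)).
Proof.
set L := fun k => log2floor (k + 1 + log2floor (k + 1)).
suff H : forall n k, 1 <= k <= n -> N k = k + L k.
  by move=> k1; apply: (H k); rewrite k1 leqnn.
clear k; elim=> [|n IH] [|k] // /andP[_ kn].
case: k kn => [_|k kn]; first by vm_compute.
have IHj : forall j, 1 <= j <= k.+1 -> N j = j + L j.
  by move=> j hj; apply: IH; lia.
rewrite Nrec //.
set G := L k.+2.
have hG := Lspec k.+2 G.+1 isT.
rewrite -/(L k.+2) -/G ltnn in hG.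
have hG' := Lspec k.+2 G isT.
rewrite -/(L k.+2) -/G leqnn in hG'.
rewrite expnS in hG.
have {}hG : k.+2 + G.+1 < 2 * 2^G by rewrite ltnNge -hG.
apply/eqP; rewrite eqn_leq; apply/andP; split.
  rewrite big_seq; elim/big_ind: _ => // [x y hx hy|i]; first by rewrite geq_max hx hy.
  rewrite mem_index_iota => /andP[i2 ik].
  rewrite IHj; last by lia.
  set j := k.+3 - i.
  have [gG|Gg] := ltnP (L j) G.
    rewrite geq_min; apply/orP; right; lia.
  have := Lspec j G.
  rewrite Gg => /(_ ltac:(lia)) h.
  rewrite geq_min; apply/orP; left.
  symmetry in h; lia.
have G1 : 1 <= G by rewrite Lspec //= expn1.
case: G G1 hG hG' => [//|g] _ hG hG'.
rewrite expnS in hG'.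
have gP : g < 2 ^ g by apply: ltn_expl.
set j := 2 ^ g - g.
have hi : k.+3 - j \in index_iota 2 k.+3 by rewrite mem_index_iota; lia.
have := @leq_bigmax_seq nat (index_iota 2 k.+3) xpredT
  (fun i => minn (2 * i) (N (k.+3 - i) + i)) _ hi isT.
apply: leq_trans.
have -> : k.+3 - (k.+3 - j) = j by lia.
rewrite IHj; last by lia.
have : g <= L j by rewrite Lspec; [lia|lia].
move=> hj; rewrite leq_min; apply/andP; split; lia.
Qed.
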